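(* Let $A\in\mathbb{R}^{n\times n}$, $B\in\mathbb{R}^{n\times b}$, $C\in\mathbb{R}^{c\times n}$ with $(A,B)$ stabilizable and $(A,C)$ detectable. Let $X_\infty\in\mathbb{R}^{n\times n}$ be the unique symmetric positive semidefinite solution of the algebraic Riccati equation $0=A^TX+XA-XBB^TX+C^TC$, and let $q_1,\dots,q_n\in\mathbb{R}^n$ be an orthonormal system of eigenvectors of $X_\infty$ with corresponding eigenvalues $\lambda_1(X_\infty)\ge\dots\ge\lambda_n(X_\infty)$ (i.e. $X_\infty q_i=\lambda_i(X_\infty)q_i$). Let $X\colon[0,\infty)\to\mathbb{R}^{n\times n}$ be the unique solution of the differential Riccati equation $$\dot X(t)=A^TX(t)+X(t)A-X(t)BB^TX(t)+C^TC,\qquad X(0)=0.$$ Then for all $i,j=1,\dots,n$ and all $t\ge0$, $$|q_i^TX(t)q_j|\le\sqrt{\lambda_i(X_\infty)\,\lambda_j(X_\infty)}.$$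
   Context: $\lambda_k(\cdot)$ denotes the $k$-th largest eigenvalue of a real symmetric matrix. The differential Riccati equation with zero initial value has a unique solution on $[0,\infty)$. *)

(* Defs.v *)
From HB Require Import structures.
From mathcomp Require Import all_boot all_order all_algebra.
From mathcomp Require Import all_classical all_reals all_analysis.
From mathcomp Require Import complex.
Set Implicit Arguments. Unset Strict Implicit. Unset Printing Implicit Defensive.
Import Order.TTheory GRing.Theory Num.Theory.
Import numFieldNormedType.Exports.
Local Open Scope classical_set_scope.
Local Open Scope ring_scope.

Definition is_eigenvalueC (R : realType) (n : nat) (M : 'M[R]_n)
  (mu : complex R) : Prop :=
  exists v : 'cV[complex R]_n, v != 0 /\
    map_mx (real_complex R) M *m v = mu *: v.

Definition hurwitz (R : realType) (n : nat) (M : 'M[R]_n) : Prop :=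
  forall mu : complex R, is_eigenvalueC M mu -> Re mu < 0.

Definition stabilizable (R : realType) (n b : nat)
  (A : 'M[R]_n) (B : 'M[R]_(n, b)) : Prop :=
  exists K : 'M[R]_(b, n), hurwitz (A - B *m K).

Definition detectable (R : realType) (n c : nat)
  (A : 'M[R]_n) (C : 'M[R]_(c, n)) : Prop :=
  exists L : 'M[R]_(n, c), hurwitz (A - L *m C).

Definition symmetric_mx (R : realType) (n : nat) (X : 'M[R]_n) : Prop :=
  X^T = X.

Definition psd_mx (R : realType) (n : nat) (X : 'M[R]_n) : Prop :=
  symmetric_mx X /\ forall v : 'cV[R]_n, 0 <= (v^T *m X *m v) 0 0.

Definition riccati (R : realType) (n b c : nat) (A : 'M[R]_n)
  (B : 'M[R]_(n, b)) (C : 'M[R]_(c, n)) (X : 'M[R]_n) : 'M[R]_n :=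
  A^T *m X + X *m A - X *m B *m B^T *m X + C^T *m C.

Definition DRE_solution (R : realType) (n b c : nat) (A : 'M[R]_n)
  (B : 'M[R]_(n, b)) (C : 'M[R]_(c, n)) (X : R -> 'M[R]_n) : Prop :=
  X 0 = 0 /\
  (forall i j : 'I_n, (fun s => X s i j) @ 0^'+ --> (0 : R)) /\
  (forall t : R, 0 < t -> forall i j : 'I_n,
     is_derive t (1 : R) (fun s => X s i j) (riccati A B C (X t) i j)).

(* Main.v *)
Require Import Defs.
From HB Require Import structures.
From mathcomp Require Import all_boot all_order all_algebra.
From mathcomp Require Import all_classical all_reals all_analysis.
From mathcomp Require Import complex.
From mathcomp Require Import ring lra.
Import Order.TTheory GRing.Theory Num.Theory.
Import numFieldNormedType.Exports.
Set Implicit Arguments. Unset Strict Implicit. Unset Printing Implicit Defensive.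
Local Open Scope ring_scope.
Local Open Scope classical_set_scope.

Section Alg.
Variable R : realType.

Definition qf n (M : 'M[R]_n) (v : 'rV[R]_n) : R := (v *m M *m v^T) 0 0.
Definition bf n (M : 'M[R]_n) (u w : 'rV[R]_n) : R := (u *m M *m w^T) 0 0.

Lemma bf_sym n (M : 'M[R]_n) u w : M^T = M -> bf M u w = bf M w u.
Proof.
move=> sM; rewrite /bf.
have e (x : 'M[R]_1) : x 0 0 = x^T 0 0 by rewrite mxE.
rewrite [LHS]e.
by rewrite !trmx_mul trmxK sM mulmxA.
Qed.

Lemma qf_expand n (M : 'M[R]_n) v w (s : R) : M^T = M ->
  qf M (v + s *: w) = qf M v + 2 * s * bf M v w + s ^+ 2 * qf M w.
Proof.
move=> sM; have := bf_sym v w sM; rewrite /bf => e.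
rewrite /qf linearD linearZ /= mulmxDl mulmxDr !mulmxDl.
rewrite -!scalemxAl -!scalemxAr.
move: e; set a := v *m M *m v^T; set b := v *m M *m w^T; set c := w *m M *m v^T.
set d := w *m M *m w^T => e.
rewrite !mxE; rewrite !mxE in e; rewrite e; ring.
Qed.

Lemma qf_scale n (M : 'M[R]_n) v (s : R) : qf M (s *: v) = s ^+ 2 * qf M v.
Proof.
by rewrite /qf linearZ /= -!scalemxAl -scalemxAr !mxE expr2 mulrA.
Qed.

Definition psd n (M : 'M[R]_n) := M^T = M /\ forall v, 0 <= qf M v.

Lemma psd_bf0 n (M : 'M[R]_n) v w : psd M -> qf M v = 0 -> bf M v w = 0.
Proof.
move=> [sM pM] qv0.
set a := bf M v w; set b := qf M w.
have b0 : 0 <= b by apply: pM.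
have := pM (v + (- (a / (b + 1))) *: w); rewrite qf_expand // qv0 -/a -/b.
have b1 : 0 < b + 1 by rewrite ltr_wpDl.
move=> H; clear pM.
have H2 : 0 <= - (a ^+ 2 * (b + 2)) / (b + 1) ^+ 2.
  suff -> : - (a ^+ 2 * (b + 2)) / (b + 1) ^+ 2 =
     0 + 2 * - (a / (b + 1)) * a + (- (a / (b + 1))) ^+ 2 * b by [].
  by field; exact: lt0r_neq0.
rewrite ler_pdivlMr ?exprn_gt0 // mul0r oppr_ge0 in H2.
have b2 : 0 < b + 2 by rewrite ltr_wpDl.
have : a ^+ 2 * (b + 2) = 0.
  by apply/eqP; rewrite eq_le H2 mulr_ge0 // ?sqr_ge0 // ltW.
move/eqP; rewrite mulf_eq0 (gt_eqF b2) orbF sqrf_eq0.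
by move/eqP.
Qed.

Lemma psd_null n (M : 'M[R]_n) v : psd M -> qf M v = 0 -> v *m M = 0.
Proof.
move=> pM qv0; apply/rowP => j.
have := psd_bf0 (delta_mx 0 j) pM qv0; rewrite /bf.
rewrite mxE (bigD1 j) //= big1 ?addr0.
  by rewrite !mxE !eqxx /= mulr1 => ->.
by move=> k kj; rewrite !mxE (negbTE kj) /= mulr0.
Qed.

Lemma psd_CS n (M : 'M[R]_n) u w : psd M ->
  bf M u w ^+ 2 <= qf M u * qf M w.
Proof.
move=> pM; have [sM pos] := pM.
set a := bf M u w; set qu := qf M u; set qw := qf M w.
have qu0 : 0 <= qu by apply: pos.
have qw0 : 0 <= qw by apply: pos.
have [qwz|qwp] := eqVneq qw 0.
  have : bf M w u = 0 by apply: psd_bf0.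
  by rewrite -bf_sym // -/a => ->; rewrite expr0n /= mulr_ge0.
have qwgt : 0 < qw by rewrite lt_def qwp.
have := pos (u + (- (a / qw)) *: w); rewrite qf_expand // -/a -/qu -/qw => H.
have : 0 <= qu - a ^+ 2 / qw.
  suff -> : qu - a ^+ 2 / qw = qu + 2 * - (a / qw) * a + (- (a / qw)) ^+ 2 * qw by [].
  by field; rewrite qwp.
rewrite subr_ge0 ler_pdivrMr //.
Qed.

End Alg.

Lemma qfB (R : realType) n (M N : 'M[R]_n) v : qf (M - N) v = qf M v - qf N v.
Proof. by rewrite /qf mulmxBr mulmxBl !mxE. Qed.

Lemma final_step (R : realType) (n : nat) (Xinf Q Y : 'M[R]_n) (lam : 'I_n -> R) :
  Q^T *m Q = 1%:M ->
  (forall i : 'I_n, Xinf *m col i Q = lam i *: col i Q) ->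
  psd Y -> psd (Xinf - Y) ->
  forall (i j : 'I_n),
    `| ((col i Q)^T *m Y *m col j Q) 0 0 | <= Num.sqrt (lam i * lam j).
Proof.
move=> QQ eig pY pE i j.
have qq k : ((col k Q)^T *m col k Q) 0 0 = 1.
  have : (Q^T *m Q) k k = 1 by rewrite QQ mxE eqxx.
  by move=> <-; rewrite !mxE; apply: eq_bigr => l _; rewrite !mxE.
have ql k : qf Xinf (col k Q)^T = lam k.
  by rewrite /qf trmxK -mulmxA eig -scalemxAr mxE qq mulr1.
have le k : 0 <= qf Y (col k Q)^T <= lam k.
  have [_ p1] := pY; have [_ p2] := pE.
  by rewrite p1 /= -subr_ge0 -(ql k) -qfB p2.
have := psd_CS (col i Q)^T (col j Q)^T pY.
rewrite /bf trmxK => H.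
rewrite -sqrtr_sqr; apply: ler_wsqrtr; apply: (le_trans H).
have /andP[a1 a2] := le i; have /andP[b1 b2] := le j.
by apply: ler_pM.
Qed.

Section Helpers.
Variable R : realType.

Lemma near_left (t0 : R) (P : R -> Prop) : 0 < t0 ->
  (\forall z \near t0, P z) -> exists s, (0 <= s < t0) /\ P s.
Proof.
move=> t0p /nbhs_ballP [e e0 H].
have m0 : 0 < Num.min t0 e by rewrite lt_min t0p.
have m1 : Num.min t0 e <= t0 by rewrite ge_min lexx.
have m2 : Num.min t0 e <= e by rewrite ge_min lexx orbT.
exists (t0 - Num.min t0 e / 2); split.
  apply/andP; split; lra.
apply: H; rewrite -ball_normE /ball_ /=.
rewrite opprB addrC subrK ger0_norm; lra.
Qed.

Lemma near_right_ball (t0 : R) (P : R -> Prop) :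
  (\forall z \near t0^'+, P z) -> exists2 e, 0 < e & forall s, t0 < s < t0 + e -> P s.
Proof.
rewrite /at_right /within => /nbhs_ballP [e e0 H].
exists e => // s /andP[s1 s2]; apply: H => //.
rewrite -ball_normE /ball_ /= ltr0_norm ?subr_lt0 //; lra.
Qed.

Definition Sph n : set 'rV[R]_n := [set w | `|w| = 1].

Lemma Sph_compact n : compact (@Sph n).
Proof.
apply: bounded_closed_compact.
  by exists 1; split => // M M1 x /= Sx; rewrite Sx ltW.
have -> : @Sph n = (Num.Def.normr : 'rV[R]_n -> R) @^-1` [set x | x = 1] by [].
apply: closed_comp; last exact: closed_eq.
by move=> x _; apply: norm_continuous.
Qed.

Lemma Sph_neq0 n w : @Sph n w -> w != 0.
Proof. by rewrite /Sph /= => h; apply/eqP => w0; move: h; rewrite w0 normr0 => /eqP; rewrite eq_sym oner_eq0. Qed.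

Lemma Sph_normalize n (w : 'rV[R]_n) : w != 0 -> @Sph n (`|w|^-1 *: w).
Proof.
move=> w0; rewrite /Sph /= normrZV //.
by rewrite unitfE normr_eq0.
Qed.

Lemma Sph_entry n w k : @Sph n w -> `|w 0 k| <= 1.
Proof.
rewrite /Sph /= => <-; have -> : `|w| = mx_norm w by []; rewrite mx_normrE.
exact: (le_bigmax _ (fun ij : 'I_1 * 'I_n => `|w ij.1 ij.2|) (0, k)).
Qed.


Lemma qf_sum n (M : 'M[R]_n) w :
  qf M w = \sum_(l < n) \sum_(k < n) w 0 k * M k l * w 0 l.
Proof.
rewrite /qf mxE; apply: eq_bigr => l _; rewrite mxE mulr_suml.
by apply: eq_bigr => k _; rewrite !mxE.
Qed.

Lemma qf_bound n (M : 'M[R]_n) w : @Sph n w ->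
  `|qf M w| <= \sum_(l < n) \sum_(k < n) `|M k l|.
Proof.
move=> Sw; rewrite qf_sum; apply: (le_trans (ler_norm_sum _ _ _)).
apply: ler_sum => l _; apply: (le_trans (ler_norm_sum _ _ _)).
apply: ler_sum => k _; rewrite !normrM.
have h1 := Sph_entry k Sw; have h2 := Sph_entry l Sw.
suff: `|w 0 k| * `|M k l| * `|w 0 l| <= 1 * `|M k l| * 1 by rewrite mul1r mulr1.
apply: ler_pM; rewrite ?mulr_ge0 ?normr_ge0 //.
by apply: ler_pM; rewrite ?normr_ge0.
Qed.

Lemma qf_cont n (M : 'M[R]_n) : continuous (@qf R n M).
Proof.
have -> : @qf R n M = fun w => \sum_(l < n) \sum_(k < n) w 0 k * M k l * w 0 l.
  by apply/funext => w; rewrite qf_sum.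
apply: continuous_big => [|l _]; first exact: add_continuous.
apply: continuous_big => [|k _]; first exact: add_continuous.
move=> w.
apply: (continuousM (s := fun x : 'rV[R]_n => x 0 k * M k l) (t := fun x => x 0 l)).
  apply: (continuousM (s := fun x : 'rV[R]_n => x 0 k) (t := fun=> M k l)).
    exact: coord_continuous.
  exact: cst_continuous.
exact: coord_continuous.
Qed.

Lemma qf_derive n (Z : R -> 'M[R]_n) (D : 'M[R]_n) (t : R) (v : 'rV[R]_n) :
  (forall i j, is_derive t 1 (fun s => Z s i j) (D i j)) ->
  is_derive t 1 (fun s => qf (Z s) v) (qf D v).
Proof.
move=> dZ.
have -> : (fun s => qf (Z s) v) =
   \sum_(l < n) \sum_(k < n) ((v 0 k * v 0 l) \*: (fun s => Z s k l)).
  apply/funext => s; rewrite qf_sum fct_sumE; apply: eq_bigr => l _.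
  rewrite fct_sumE; apply: eq_bigr => k _ /=.
  by rewrite /GRing.scale /= mulrAC.
rewrite qf_sum.
have -> : \sum_(l < n) \sum_(k < n) v 0 k * D k l * v 0 l =
   \sum_(l < n) \sum_(k < n) (v 0 k * v 0 l) *: D k l.
  by apply: eq_bigr => l _; apply: eq_bigr => k _; rewrite /GRing.scale /= mulrAC.
apply: is_derive_sum => l; apply: is_derive_sum => k.
Qed.

End Helpers.

Section Barrier.
Variable R : realType.

Lemma is_derive_cont (f : R -> R) (t d : R) : is_derive t 1 f d -> {for t, continuous f}.
Proof.
move=> H; apply: differentiable_continuous; apply/derivable1_diffP.
by case: H.
Qed.

Lemma pd_barrier n (T : R) (Z D : R -> 'M[R]_n) :
  (forall i j, (fun s => Z s i j) @ 0^'+ --> Z 0 i j) ->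
  (forall t : R, 0 < t -> forall i j, is_derive t 1 (fun s => Z s i j) (D t i j)) ->
  (forall t : R, 0 <= t -> (Z t)^T = Z t) ->
  (forall v, v != 0 -> 0 < qf (Z 0) v) ->
  (forall (t : R) v, 0 < t <= T -> v *m Z t = 0 -> v != 0 -> 0 < qf (D t) v) ->
  forall t : R, 0 <= t <= T -> forall v, v != 0 -> 0 < qf (Z t) v.
Proof.
move=> Z0 dZ sZ pos0 bar t1 /andP[t10 t1T] v1 v10.
rewrite ltNge; apply/negP => neg1.
pose S := @Sph R n.
pose A := [set t | 0 <= t <= t1 /\ exists2 w, S w & qf (Z t) w <= 0].
have At1 : A t1.
  split; first by rewrite t10 lexx.
  exists (`|v1|^-1 *: v1); first exact: Sph_normalize.
  by rewrite qf_scale; apply: mulr_ge0_le0 => //; exact: sqr_ge0.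
have A0 : A !=set0 by exists t1.
have Alb : lbound A 0 by move=> t [/andP[]].
have hlb : has_lbound A by exists 0.
have hinf : has_inf A by split.
set t0 := inf A.
have t0ge : 0 <= t0 by apply: lb_le_inf.
have t0A s : A s -> t0 <= s by move=> As; apply: ge_inf.
have t0le : t0 <= t1 by apply: t0A.
have rc : forall i j, (fun s => Z s i j) @ t0^'+ --> Z t0 i j.
  move=> i j; case: (eqVneq t0 0) => [e|ne].
    by rewrite e; exact: Z0.
  have t0p : 0 < t0 by rewrite lt_def ne.
  apply: cvg_at_right_filter; exact: (is_derive_cont (dZ t0 t0p i j)).
have [c Sc Hc] : exists2 c, S c & qf (Z t0) c <= 0.
  have S0 : S !=set0 by exists (`|v1|^-1 *: v1); exact: Sph_normalize.
  have qc : {within S, continuous (qf (Z t0))}.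
    by apply: continuous_subspaceT; exact: qf_cont.
  have [c cS cmin] := EVT_min_rV S0 (@Sph_compact R n) qc.
  rewrite inE in cS; exists c => //.
  rewrite leNgt; apply/negP => mu0.
  pose g s := \sum_(l < n) \sum_(k < n) `|Z t0 k l - Z s k l|.
  have gc : g s @[s --> t0^'+] --> 0.
    have -> : 0 = \sum_(l < n) \sum_(k < n) `|Z t0 k l - Z t0 k l|.
      by rewrite big1 // => l _; rewrite big1 // => k _; rewrite subrr normr0.
    apply: cvg_big => [|l _]; first exact: add_continuous.
    apply: cvg_big => [|k _]; first exact: add_continuous.
    apply: cvg_norm; apply: cvgB; first exact: cvg_cst.
    exact: rc.
  have Hn := @cvgr_lt _ _ _ _ g 0 gc _ mu0.
  have [e e0 He] := near_right_ball (Hn _).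
  have [s As slt] := inf_adherent e0 hinf.
  have t0s := t0A s As.
  case: As => _ [w Sw qw].
  have cw : qf (Z t0) c <= qf (Z t0) w by apply: cmin; rewrite inE.
  move: t0s; rewrite le_eqVlt => /orP[/eqP st|st].
    by move: qw; rewrite -st => qw; move: mu0; rewrite ltNge (le_trans cw qw).
  have gs : g s < qf (Z t0) c by apply: He; rewrite st slt.
  have hb := qf_bound (Z t0 - Z s) Sw.
  have eqq : \sum_(l < n) \sum_(k < n) `|(Z t0 - Z s) k l| = g s.
    by apply: eq_bigr => l _; apply: eq_bigr => k _; rewrite !mxE.
  rewrite eqq qfB in hb.
  have : qf (Z t0) w - qf (Z s) w <= g s by apply: le_trans (ler_norm _) hb.
  move: qw cw gs; clear; lra.
have t0p : 0 < t0.
  rewrite lt_def t0ge andbT; apply/eqP => e0.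
  move: Hc; rewrite e0 => Hc.
  by have := pos0 c (Sph_neq0 Sc); rewrite ltNge Hc.
have pre : forall s, 0 <= s < t0 -> forall w, S w -> 0 < qf (Z s) w.
  move=> s /andP[s0 st] w Sw; rewrite ltNge; apply/negP => h.
  have As : A s.
    by split; [rewrite s0 (ltW (lt_le_trans st t0le)) | exists w].
  by have := t0A s As; rewrite leNgt st.
have psd0 : psd (Z t0).
  split; first exact: sZ (ltW t0p).
  move=> w; have [->|w0] := eqVneq w 0.
    by rewrite /qf mul0mx mul0mx mxE.
  have Sw' := Sph_normalize w0.
  suff : 0 <= qf (Z t0) (`|w|^-1 *: w).
    by rewrite qf_scale pmulr_rge0 // exprn_gt0 // invr_gt0 normr_gt0.
  rewrite leNgt; apply/negP => neg.
  have cont := is_derive_cont (qf_derive (`|w|^-1 *: w) (dZ t0 t0p)).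
  have Hn := @cvgr_lt _ _ _ _ _ _ cont _ neg.
  have [s [sr h]] := near_left t0p (Hn _).
  by have := pre s sr _ Sw'; rewrite ltNge (ltW h).
have qc0 : qf (Z t0) c = 0.
  by apply/eqP; rewrite eq_le Hc (psd0.2 c).
have null := psd_null psd0 qc0.
have dpos : 0 < qf (D t0) c.
  by apply: bar => //; [rewrite t0p (le_trans t0le t1T) | exact: Sph_neq0].
have := qf_derive c (dZ t0 t0p).
move/is_derive1_caratheodory => [g [gE gc gt0]].
rewrite -gt0 in dpos.
have Hn := @cvgr_gt _ _ _ _ _ _ gc _ dpos.
have [s [sr gs]] := near_left t0p (Hn _).
have := gE s; rewrite qc0 subr0 => fs.
have := pre s sr c Sc; rewrite fs pmulr_rgt0 // subr_gt0 ltNge.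
by case/andP: sr => _ /ltW ->.
Qed.

End Barrier.

Section Barrier2.
Variable R : realType.

Lemma qfD n (M N : 'M[R]_n) v : qf (M + N) v = qf M v + qf N v.
Proof. by rewrite /qf mulmxDr mulmxDl !mxE. Qed.

Lemma qfZ n (M : 'M[R]_n) (c : R) v : qf (c *: M) v = c * qf M v.
Proof. by rewrite /qf -scalemxAr -scalemxAl !mxE. Qed.

Lemma qf1_ge0 n (v : 'rV[R]_n) : 0 <= qf 1%:M v.
Proof.
rewrite /qf mulmx1 mxE; apply: sumr_ge0 => i _; rewrite mxE -expr2; exact: sqr_ge0.
Qed.

Lemma qf1_pos n (v : 'rV[R]_n) : v != 0 -> 0 < qf 1%:M v.
Proof.
move=> v0; rewrite lt_def qf1_ge0 andbT; apply/eqP => h.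
have p1 : psd (1%:M : 'M[R]_n) by split; [exact: tr_scalar_mx | exact: qf1_ge0].
by move: (psd_null p1 h); rewrite mulmx1 => /eqP; rewrite (negbTE v0).
Qed.

Lemma is_derive_expK (K t : R) : is_derive t 1 (fun s => expR (K * s)) (K * expR (K * t)).
Proof.
have h : is_derive t 1 (fun s : R => K * s) K.
  have -> : (fun s : R => K * s) = K \*: (fun s => s) by [].
  rewrite -[X in is_derive _ _ _ X]mulr1.
  apply: is_deriveZ.
have := is_derive1_comp (is_derive_expR (K * t)) h.
by rewrite mulrC.
Qed.

Lemma psd_barrier n (T K e0 : R) (Y DY : R -> 'M[R]_n) :
  0 < e0 ->
  (forall i j, (fun s => Y s i j) @ 0^'+ --> Y 0 i j) ->
  (forall t : R, 0 < t -> forall i j, is_derive t 1 (fun s => Y s i j) (DY t i j)) ->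
  (forall t : R, 0 <= t -> (Y t)^T = Y t) ->
  (forall v, 0 <= qf (Y 0) v) ->
  (forall (t e : R) v, 0 < t <= T -> 0 < e <= e0 ->
     v *m Y t = - (e * expR (K * t)) *: v -> v != 0 ->
     0 < qf (DY t) v + e * K * expR (K * t) * qf 1%:M v) ->
  forall t : R, 0 <= t <= T -> forall v, 0 <= qf (Y t) v.
Proof.
move=> e00 Y0 dY sY pos0 bar t tT v.
have [->|v0] := eqVneq v 0; first by rewrite /qf mul0mx mul0mx mxE.
have key : forall e, 0 < e <= e0 ->
    0 < qf (Y t) v + e * expR (K * t) * qf 1%:M v.
  move=> e /andP[e0p ee0].
  pose Z s := Y s + (e * expR (K * s)) *: (1%:M : 'M[R]_n).
  pose D s := DY s + (e * (K * expR (K * s))) *: (1%:M : 'M[R]_n).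
  have Zij s i j : Z s i j = Y s i j + e * expR (K * s) * (i == j)%:R.
    by rewrite /Z !mxE.
  have Dij s i j : D s i j = DY s i j + e * (K * expR (K * s)) * (i == j)%:R.
    by rewrite /D !mxE.
  have := @pd_barrier R n T Z D.
  have -> : qf (Y t) v + e * expR (K * t) * qf 1%:M v = qf (Z t) v.
    by rewrite /Z qfD qfZ.
  apply => //.
  - move=> i j; under eq_cvg do rewrite Zij.
    rewrite Zij; apply: cvgD; first exact: Y0.
    apply: cvgMr_tmp; apply: cvgMl_tmp.
    apply: cvg_at_right_filter.
    exact: (is_derive_cont (is_derive_expK K 0)).
  - move=> s s0 i j.
    have -> : (fun x => Z x i j) = (fun x => Y x i j) + (e * (i == j)%:R) \*: (fun x => expR (K * x)).
      by apply/funext => x; rewrite Zij /= /GRing.scale /= mulrAC.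
    rewrite Dij.
    have -> : e * (K * expR (K * s)) * (i == j)%:R = (e * (i == j)%:R) *: (K * expR (K * s)).
      by rewrite /GRing.scale /= mulrAC.
    apply: is_deriveD; first exact: dY.
    apply: is_deriveZ; exact: is_derive_expK.
  - move=> s s0; rewrite /Z linearD /= sY // linearZ /= tr_scalar_mx //.
  - move=> w w0; rewrite /Z qfD qfZ mulr0 expR0 mulr1.
    have := pos0 w; have := qf1_pos w0; have := e0p.
    move=> a b c; rewrite ltr_wpDl //; apply: mulr_gt0 => //.
  - move=> s w sT wZ w0.
    rewrite /D qfD qfZ.
    have := bar s e w sT (ltac:(by rewrite e0p ee0)) _ w0; rewrite mulrA; apply.
    move: wZ; rewrite /Z mulmxDr scalemx1 mul_mx_scalar => /eqP; rewrite addr_eq0 => /eqP ->.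
    by rewrite scaleNr.
rewrite leNgt; apply/negP => neg.
set a := qf (Y t) v in neg key.
set c := expR (K * t) * qf 1%:M v.
have c0 : 0 <= c by rewrite mulr_ge0 ?expR_ge0 ?qf1_ge0.
pose e := Num.min e0 (- a / (c + 1)).
have c1 : 0 < c + 1 by rewrite ltr_wpDl.
have ep : 0 < e by rewrite lt_min e00 divr_gt0 // oppr_gt0.
have ee0 : e <= e0 by rewrite ge_min lexx.
have ea : e * (c + 1) <= - a.
  by rewrite -ler_pdivlMr // ge_min lexx orbT.
have := key e; rewrite ep ee0 => /(_ isT).
rewrite -mulrA -/c.
move: ea; rewrite mulrDr mulr1; move: ep; clear; lra.
Qed.

End Barrier2.

Section Dot.
Variable R : realType.

Definition dot m (p q : 'rV[R]_m) : R := (p *m q^T) 0 0.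

Lemma dotC m (p q : 'rV[R]_m) : dot p q = dot q p.
Proof.
rewrite /dot; have e (x : 'M[R]_1) : x 0 0 = x^T 0 0 by rewrite mxE.
by rewrite [LHS]e trmx_mul trmxK.
Qed.

Lemma dotDl m (p q r : 'rV[R]_m) : dot (p + q) r = dot p r + dot q r.
Proof. by rewrite /dot mulmxDl mxE. Qed.

Lemma dotDr m (p q r : 'rV[R]_m) : dot r (p + q) = dot r p + dot r q.
Proof. by rewrite dotC dotDl !(dotC r). Qed.

Lemma dotZl m (k : R) (p q : 'rV[R]_m) : dot (k *: p) q = k * dot p q.
Proof. by rewrite /dot -scalemxAl mxE. Qed.

Lemma dotZr m (k : R) (p q : 'rV[R]_m) : dot q (k *: p) = k * dot q p.
Proof. by rewrite dotC dotZl dotC. Qed.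

Lemma dot_ge0 m (p : 'rV[R]_m) : 0 <= dot p p.
Proof.
rewrite /dot mxE; apply: sumr_ge0 => i _; rewrite mxE -expr2; exact: sqr_ge0.
Qed.

Lemma qf_dot n (M : 'M[R]_n) v : qf M v = dot (v *m M) v.
Proof. by []. Qed.

Lemma qf1_dot n (v : 'rV[R]_n) : qf 1%:M v = dot v v.
Proof. by rewrite /qf mulmx1. Qed.

Lemma ric_qf n b c (A : 'M[R]_n) (B : 'M[R]_(n, b)) (C : 'M[R]_(c, n)) X v :
  X^T = X ->
  qf (riccati A B C X) v = 2 * dot (v *m X) (v *m A^T)
     - dot (v *m X *m B) (v *m X *m B) + dot (v *m C^T) (v *m C^T).
Proof.
move=> sX; rewrite /riccati qfD qfB qfD.
have Xv : X *m v^T = (v *m X)^T by rewrite trmx_mul sX.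
have -> : qf (A^T *m X) v = dot (v *m X) (v *m A^T).
  by rewrite dotC /qf /dot mulmxA -mulmxA Xv.
have -> : qf (X *m A) v = dot (v *m X) (v *m A^T).
  by rewrite /qf /dot trmx_mul trmxK !mulmxA.
have -> : qf (X *m B *m B^T *m X) v = dot (v *m X *m B) (v *m X *m B).
  by rewrite /qf /dot !trmx_mul sX !mulmxA.
have -> : qf (C^T *m C) v = dot (v *m C^T) (v *m C^T).
  by rewrite /qf /dot trmx_mul trmxK !mulmxA.
by rewrite mulr2n mulrDl mul1r.
Qed.

Definition SA n (M : 'M[R]_n) : R := \sum_(l < n) \sum_(k < n) `|M k l|.

Lemma SA_ge0 n (M : 'M[R]_n) : 0 <= SA M.
Proof. by apply: sumr_ge0 => l _; apply: sumr_ge0. Qed.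

Lemma qf_bound1 n (M : 'M[R]_n) v : `|qf M v| <= SA M * qf 1%:M v.
Proof.
have s0 : 0 <= qf 1%:M v by exact: qf1_ge0.
have sq k : v 0 k ^+ 2 <= qf 1%:M v.
  rewrite qf1_dot /dot mxE (bigD1 k) //= mxE -expr2 ler_wpDr //.
  by apply: sumr_ge0 => i _; rewrite mxE -expr2 sqr_ge0.
rewrite qf_sum /SA mulr_suml; apply: (le_trans (ler_norm_sum _ _ _)).
apply: ler_sum => l _; rewrite mulr_suml; apply: (le_trans (ler_norm_sum _ _ _)).
apply: ler_sum => k _; rewrite !normrM.
have hk := sq k; have hl := sq l.
have : `|v 0 k| * `|v 0 l| <= qf 1%:M v.
  have e1 : `|v 0 k| ^+ 2 = v 0 k ^+ 2 by rewrite real_normK ?num_real.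
  have e2 : `|v 0 l| ^+ 2 = v 0 l ^+ 2 by rewrite real_normK ?num_real.
  have : 0 <= (`|v 0 k| - `|v 0 l|) ^+ 2 by exact: sqr_ge0.
  rewrite sqrrB e1 e2; move: hk hl; clear; lra.
move=> H; rewrite mulrAC mulrC; apply: ler_wpM2l => //.
Qed.

End Dot.

Section Bounds.
Variable R : realType.

Lemma qfN n (M : 'M[R]_n) v : qf (- M) v = - qf M v.
Proof. by rewrite /qf mulmxN mulNmx mxE. Qed.

Lemma qf0 n (v : 'rV[R]_n) : qf 0 v = 0.
Proof. by rewrite /qf mulmx0 mul0mx mxE. Qed.

Lemma qfv0 n (M : 'M[R]_n) : qf M 0 = 0.
Proof. by rewrite /qf !mul0mx mxE. Qed.

Lemma qfA_dot n (A : 'M[R]_n) v : dot v (v *m A^T) = qf A^T v.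
Proof. by rewrite qf_dot dotC. Qed.

Lemma qfBB_dot n b (B : 'M[R]_(n, b)) (P : 'M[R]_n) v :
  dot (v *m P *m B) (v *m B) = qf (P *m B *m B^T) v.
Proof. by rewrite qf_dot /dot trmx_mul !mulmxA. Qed.

Lemma X_psd n b c (A : 'M[R]_n) (B : 'M[R]_(n, b)) (C : 'M[R]_(c, n)) (X : R -> 'M[R]_n) :
  DRE_solution A B C X -> (forall t : R, 0 <= t -> (X t)^T = X t) ->
  forall t : R, 0 <= t -> psd (X t).
Proof.
move=> [X0 [Xr dX]] sX t t0; split; first exact: sX.
set S1 := SA (A^T); set S2 := SA (1%:M *m B *m B^T).
set K := 2 * S1 + S2 + 1.
have S10 : 0 <= S1 by exact: SA_ge0.
have S20 : 0 <= S2 by exact: SA_ge0.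
have K0 : 0 <= K by rewrite /K; lra.
apply: (@psd_barrier R n t K (expR (- K * t)) X (fun s => riccati A B C (X s))).
- exact: expR_gt0.
- by move=> i j; rewrite X0 mxE; exact: Xr.
- exact: sX.
- by move=> v; rewrite X0 qf0.
- move=> s e v /andP[s0 st] /andP[e0 ee0] vX v0.
  set cc := e * expR (K * s) in vX *.
  have cc0 : 0 < cc by rewrite mulr_gt0 // expR_gt0.
  have cc1 : cc <= 1.
    have h1 : expR (K * s) <= expR (K * t) by rewrite ler_expR ler_wpM2l.
    have : cc <= expR (- K * t) * expR (K * t).
      by apply: ler_pM; rewrite ?expR_ge0 ?(ltW e0).
    by rewrite -expRD mulNr addNr expR0.
  rewrite ric_qf ?sX ?(ltW s0) // vX -!scalemxAl !dotZl !dotZr.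
  rewrite qfA_dot.
  have -> : dot (v *m B) (v *m B) = qf (1%:M *m B *m B^T) v by rewrite -qfBB_dot mulmx1.
  set a := qf A^T v; set d := qf (1%:M *m B *m B^T) v.
  set q := dot _ _.
  have q0 : 0 <= q by exact: dot_ge0.
  have d0 : 0 <= d by rewrite /d -qfBB_dot mulmx1; exact: dot_ge0.
  set s1 := qf 1%:M v.
  have s10 : 0 < s1 by exact: qf1_pos.
  have ha := ler_normlW (qf_bound1 A^T v); rewrite -/a -/S1 -/s1 in ha.
  have ha' : - a <= S1 * s1 by move: (qf_bound1 A^T v); rewrite -/a -/S1 -/s1 => /ler_normlP [].
  have hd := ler_normlW (qf_bound1 (1%:M *m B *m B^T) v); rewrite -/d -/S2 -/s1 in hd.
  have inner : 0 < -2 * a - d + K * s1.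
    rewrite /K !mulrDl; lra.
  have := mulr_gt0 cc0 inner.
  have : 0 <= cc * (1 - cc) * d by rewrite mulr_ge0 // mulr_ge0 // ?subr_ge0 // ltW.
  have -> : e * K * expR (K * s) = cc * K by rewrite /cc mulrAC.
  move: q0; set u := cc * (1 - cc) * d; set w := cc * (- 2 * a - d + K * s1).
  have -> : 2 * (- cc * a) - - cc * (- cc * d) + q + cc * K * s1 = w + u + q.
    by rewrite /w /u; ring.
  clear; lra.
- by rewrite t0 lexx.
Qed.

Lemma X_le n b c (A : 'M[R]_n) (B : 'M[R]_(n, b)) (C : 'M[R]_(c, n)) (X : R -> 'M[R]_n)
  (Xinf : 'M[R]_n) :
  DRE_solution A B C X -> (forall t : R, 0 <= t -> (X t)^T = X t) ->
  psd Xinf -> riccati A B C Xinf = 0 ->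
  forall t : R, 0 <= t -> psd (Xinf - X t).
Proof.
move=> [X0 [Xr dX]] sX [sXi pXi] ric0 t t0.
have sY s : 0 <= s -> (Xinf - X s)^T = Xinf - X s.
  by move=> s0; rewrite linearB /= sXi sX.
split; first exact: sY.
set S1 := SA (A^T); set S2 := SA (Xinf *m B *m B^T).
set K := 2 * S1 + 2 * S2 + 1.
have S10 : 0 <= S1 by exact: SA_ge0.
have S20 : 0 <= S2 by exact: SA_ge0.
have K0 : 0 <= K by rewrite /K; lra.
apply: (@psd_barrier R n t K 1 (fun s => Xinf - X s) (fun s => - riccati A B C (X s))).
- exact: ltr01.
- move=> i j; rewrite X0.
  have -> : (fun s => (Xinf - X s) i j) = (fun s => Xinf i j - X s i j).
    by apply/funext => s; rewrite !mxE.
  rewrite !mxE.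
  by apply: cvgB; [exact: cvg_cst | exact: Xr].
- move=> s s0 i j.
  have -> : (fun x => (Xinf - X x) i j) = (fun=> Xinf i j) - (fun x => X x i j).
    by apply/funext => x; rewrite !mxE.
  have -> : (- riccati A B C (X s)) i j = 0 - riccati A B C (X s) i j.
    by rewrite mxE sub0r.
  apply: is_deriveB; exact: dX.
- exact: sY.
- by move=> v; rewrite X0 subr0.
- move=> s e v /andP[s0 st] /andP[e0 ee0] vX v0.
  set cc := e * expR (K * s) in vX *.
  have cc0 : 0 < cc by rewrite mulr_gt0 // expR_gt0.
  have vX' : v *m X s = v *m Xinf + cc *: v.
    by move/eqP: vX; rewrite mulmxBr scaleNr subr_eq => /eqP ->; rewrite addrAC addNr add0r.
  rewrite qfN ric_qf ?sX ?(ltW s0) // vX'.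
  have h0 := ric_qf A B C v sXi; rewrite ric0 qf0 in h0.
  rewrite mulmxDl -scalemxAl !dotDl !dotDr !dotZl !dotZr.
  rewrite (dotC (v *m B) (v *m Xinf *m B)) qfA_dot qfBB_dot.
  set a := qf A^T v; set bb := qf (Xinf *m B *m B^T) v.
  set d := dot (v *m B) (v *m B).
  have d0 : 0 <= d by exact: dot_ge0.
  set s1 := qf 1%:M v.
  have s10 : 0 < s1 by exact: qf1_pos.
  have ha : - a <= S1 * s1 by move: (qf_bound1 A^T v); rewrite -/a -/S1 -/s1 => /ler_normlP [].
  have hb := ler_normlW (qf_bound1 (Xinf *m B *m B^T) v); rewrite -/bb -/S2 -/s1 in hb.
  have hb' : - bb <= S2 * s1 by move: (qf_bound1 (Xinf *m B *m B^T) v); rewrite -/bb -/S2 -/s1 => /ler_normlP [].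
  have inner : 0 < -2 * a + 2 * bb + K * s1.
    have ha2 := ler_normlW (qf_bound1 A^T v); rewrite -/a -/S1 -/s1 in ha2.
    rewrite /K !mulrDl; lra.
  have := mulr_gt0 cc0 inner.
  have : 0 <= cc * cc * d by rewrite mulr_ge0 // mulr_ge0 // ltW.
  have -> : e * K * expR (K * s) = cc * K by rewrite /cc mulrAC.
  move: h0; set w0 := dot (v *m Xinf) (v *m A^T).
  set q := dot (v *m C^T) (v *m C^T); set z := dot (v *m Xinf *m B) (v *m Xinf *m B).
  set u := cc * cc * d; set w := cc * (-2 * a + 2 * bb + K * s1).
  move=> h0 h1 h2.
  have -> : - (2 * (w0 + cc * a) - (z + cc * bb + (cc * bb + cc * (cc * d))) + q) + cc * K * s1
     = w + u - (2 * w0 - z + q).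
    by rewrite /w /u; ring.
  rewrite -h0; lra.
- by rewrite t0 lexx.
Qed.

End Bounds.

Section Sym.
Variable R : realType.

Lemma ric_antisym n b c (A : 'M[R]_n) (B : 'M[R]_(n, b)) (C : 'M[R]_(c, n)) M :
  riccati A B C M - (riccati A B C M)^T =
  (A - B *m B^T *m M)^T *m (M - M^T) + (M - M^T) *m (A - B *m B^T *m M).
Proof.
rewrite /riccati ?linearD ?linearB ?linearN /= ?trmx_mul ?trmxK.
rewrite ?mulmxDl ?mulmxBl ?mulmxDr ?mulmxBr ?linearB ?linearN /= ?trmx_mul ?trmxK ?mulmxA.
rewrite ?mulNmx ?mulmxN ?opprK.
move: (A^T *m M) (M *m A) (M *m B *m B^T *m M) (C^T *m C) (M^T *m A) (A^T *m M^T)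
  (M^T *m B *m B^T *m M^T) (M^T *m B *m B^T *m M) => a1 a2 a3 a4 a5 a6 a7 a8.
apply/matrixP => i j; rewrite !mxE.
ring.
Qed.


End Sym.

Section Sym2.
Variable R : realType.

Lemma qf_row n (L D : 'M[R]_n) i :
  qf L (row i D) = \sum_(j < n) D i j * (D *m L) i j.
Proof.
rewrite qf_sum; apply: eq_bigr => l _; rewrite [(D *m L) _ _]mxE mulr_sumr.
by apply: eq_bigr => k _; rewrite !mxE mulrC mulrA.
Qed.

Lemma qf1_row n (D : 'M[R]_n) i :
  qf 1%:M (row i D) = \sum_(j < n) D i j * D i j.
Proof.
by rewrite qf1_dot /dot mxE; apply: eq_bigr => l _; rewrite !mxE.
Qed.

Definition sq2 n (D : 'M[R]_n) : R := \sum_(i < n) \sum_(j < n) D i j * D i j.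

Lemma sq2_ge0 n (D : 'M[R]_n) : 0 <= sq2 D.
Proof.
by apply: sumr_ge0 => i _; apply: sumr_ge0 => j _; rewrite -expr2 sqr_ge0.
Qed.

Lemma sq2_tr n (D : 'M[R]_n) : sq2 D^T = sq2 D.
Proof.
rewrite /sq2 exchange_big; apply: eq_bigr => i _; apply: eq_bigr => j _.
by rewrite !mxE.
Qed.

Lemma sumDL_bound n (L D : 'M[R]_n) :
  \sum_(i < n) \sum_(j < n) D i j * (D *m L) i j <= SA L * sq2 D.
Proof.
rewrite /sq2 mulr_sumr; apply: ler_sum => i _.
rewrite -qf_row -qf1_row.
exact: le_trans (ler_norm _) (qf_bound1 _ _).
Qed.

Lemma sumLD_bound n (L D : 'M[R]_n) :
  \sum_(i < n) \sum_(j < n) D i j * (L^T *m D) i j <= SA L * sq2 D.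
Proof.
have -> : \sum_(i < n) \sum_(j < n) D i j * (L^T *m D) i j =
    \sum_(i < n) \sum_(j < n) D^T i j * (D^T *m L) i j.
  rewrite exchange_big; apply: eq_bigr => j _; apply: eq_bigr => i _.
  have -> : L^T *m D = (D^T *m L)^T by rewrite trmx_mul trmxK.
  by rewrite !mxE.
rewrite -(sq2_tr D); exact: sumDL_bound.
Qed.

Lemma deriv_bound n (L D : 'M[R]_n) :
  \sum_(i < n) \sum_(j < n) (D i j * (L^T *m D + D *m L) i j + D i j * (L^T *m D + D *m L) i j)
  <= 4 * SA L * sq2 D.
Proof.
have -> : \sum_(i < n) \sum_(j < n) (D i j * (L^T *m D + D *m L) i j + D i j * (L^T *m D + D *m L) i j)
   = 2 * (\sum_(i < n) \sum_(j < n) D i j * (L^T *m D) i j)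
     + 2 * (\sum_(i < n) \sum_(j < n) D i j * (D *m L) i j).
  rewrite !mulr_sumr -big_split; apply: eq_bigr => i _.
  rewrite !mulr_sumr -big_split; apply: eq_bigr => j _.
  by rewrite mxE /=; ring.
have h1 := sumLD_bound L D; have h2 := sumDL_bound L D.
have -> : 4 * SA L * sq2 D = 2 * (SA L * sq2 D) + 2 * (SA L * sq2 D) by ring.
lra.
Qed.

End Sym2.

Section Sym3.
Variable R : realType.

Lemma cvg_SA n (A P : 'M[R]_n) (X : R -> 'M[R]_n) (X0 : 'M[R]_n) (F : set_system R) :
  Filter F ->
  (forall i j, (fun s => X s i j) @ F --> X0 i j) ->
  (fun s => SA (A - P *m X s)) @ F --> SA (A - P *m X0).
Proof.
move=> FF HX.
have E (Y : 'M[R]_n) : SA (A - P *m Y) =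
    \sum_(l < n) \sum_(k < n) `|A k l - \sum_(m < n) P k m * Y m l|.
  by apply: eq_bigr => l _; apply: eq_bigr => k _; rewrite !mxE.
rewrite E; under eq_cvg do rewrite E.
apply: cvg_big => [|l _]; first exact: add_continuous.
apply: cvg_big => [|k _]; first exact: add_continuous.
apply: cvg_norm; apply: cvgB; first exact: cvg_cst.
apply: cvg_big => [|m _]; first exact: add_continuous.
by apply: cvgMl_tmp; exact: HX.
Qed.

Lemma cvg_sq2 n (X : R -> 'M[R]_n) (X0 : 'M[R]_n) (F : set_system R) :
  Filter F ->
  (forall i j, (fun s => X s i j) @ F --> X0 i j) ->
  (fun s => sq2 (X s - (X s)^T)) @ F --> sq2 (X0 - X0^T).
Proof.
move=> FF HX.
have E (Y : 'M[R]_n) : sq2 (Y - Y^T) =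
    \sum_(i < n) \sum_(j < n) (Y i j - Y j i) * (Y i j - Y j i).
  by apply: eq_bigr => i _; apply: eq_bigr => j _; rewrite !mxE.
rewrite E; under eq_cvg do rewrite E.
apply: cvg_big => [|i _]; first exact: add_continuous.
apply: cvg_big => [|j _]; first exact: add_continuous.
by apply: cvgM; apply: cvgB; exact: HX.
Qed.

Lemma sq2_derive n (X : R -> 'M[R]_n) (Dv : 'M[R]_n) (t : R) :
  (forall i j, is_derive t 1 (fun s => X s i j) (Dv i j)) ->
  is_derive t 1 (fun s => sq2 (X s - (X s)^T))
    (\sum_(i < n) \sum_(j < n) ((X t - (X t)^T) i j * (Dv - Dv^T) i j
                              + (X t - (X t)^T) i j * (Dv - Dv^T) i j)).
Proof.
move=> dX.
have -> : (fun s => sq2 (X s - (X s)^T)) =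
   \sum_(i < n) \sum_(j < n) ((fun s => X s i j - X s j i) \* (fun s => X s i j - X s j i)).
  apply/funext => s; rewrite /sq2 fct_sumE; apply: eq_bigr => i _.
  by rewrite fct_sumE; apply: eq_bigr => j _; rewrite !mxE.
apply: is_derive_sum => i; apply: is_derive_sum => j.
have e1 : (X t - (X t)^T) i j = X t i j - X t j i by rewrite !mxE.
have e2 : (Dv - Dv^T) i j = Dv i j - Dv j i by rewrite !mxE.
rewrite e1 e2.
have dg : is_derive t 1 (fun s => X s i j - X s j i) (Dv i j - Dv j i).
  by apply: is_deriveB.
have := is_deriveM dg dg.
by [].
Qed.

End Sym3.

Section Sym4.
Variable R : realType.

Lemma X_sym n b c (A : 'M[R]_n) (B : 'M[R]_(n, b)) (C : 'M[R]_(c, n)) (X : R -> 'M[R]_n) :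
  DRE_solution A B C X -> forall t : R, 0 <= t -> (X t)^T = X t.
Proof.
move=> [X0 [Xr dX]] T T0.
set P := B *m B^T.
pose g s := SA (A - P *m X s).
have Xr' i j : (fun s => X s i j) @ 0^'+ --> X 0 i j by rewrite X0 mxE; exact: Xr.
have gcont : {within `[0, T], continuous g}.
  apply: (@continuous_subspaceW _ _ `[0, T] `[0, +oo[).
    by move=> x /=; rewrite !in_itv /= => /andP[->].
  apply/continuous_within_itvcyP; split.
    move=> s; rewrite in_itv /= andbT => s0.
    by apply: cvg_SA => i j; exact: is_derive_cont (dX s s0 i j).
  exact: cvg_SA.
have [cm cmI gmax] := EVT_max T0 gcont.
set Mb := g cm.
have Mb0 : 0 <= Mb by exact: SA_ge0.
set K := 4 * Mb + 1.
pose f s := sq2 (X s - (X s)^T).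
pose Dd s := riccati A B C (X s) - (riccati A B C (X s))^T.
pose fd s := \sum_(i < n) \sum_(j < n) ((X s - (X s)^T) i j * Dd s i j
                              + (X s - (X s)^T) i j * Dd s i j).
have fd_le s : 0 <= s <= T -> fd s <= (K - 1) * f s.
  move=> sI; rewrite /fd /Dd ric_antisym.
  apply: le_trans (deriv_bound _ _) _.
  have hg : g s <= Mb by apply: gmax; rewrite in_itv /=.
  have f0 : 0 <= f s by exact: sq2_ge0.
  rewrite /K addrK -/(f s).
  have -> : SA (A - B *m B^T *m X s) = g s by [].
  by rewrite -!mulrA ler_pM2l // ler_wpM2r.
have f00 : f 0 = 0.
  by rewrite /f X0 trmx0 subr0 /sq2 big1 // => i _; rewrite big1 // => j _; rewrite mxE mulr0.
pose Y s := (- f s)%:M : 'M[R]_1.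
pose DY s := (- fd s)%:M : 'M[R]_1.
have Yij s (i j : 'I_1) : Y s i j = - f s by rewrite !ord1 /Y mxE /= mulr1n.
have qfsc (a : R) (v : 'rV[R]_1) : qf a%:M v = a * qf 1%:M v.
  by rewrite -[a%:M]scalemx1 qfZ.
have key := @psd_barrier R 1 T K 1 Y DY ltr01.
have H1 : 0 <= qf (Y T) (const_mx 1).
  apply: key.
  - move=> i j; under eq_cvg do rewrite Yij.
    rewrite Yij; apply: cvgN.
    by apply: cvg_sq2.
  - move=> s s0 i j.
    have -> : (fun x => Y x i j) = - (fun x => f x).
      by apply/funext => x; rewrite Yij.
    have -> : DY s i j = - fd s by rewrite !ord1 /DY mxE /= mulr1n.
    by apply: is_deriveN; apply: sq2_derive => i' j'; exact: dX.
  - by move=> s _; rewrite /Y tr_scalar_mx.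
  - by move=> v; rewrite /Y f00 oppr0 qfsc mul0r.
  - move=> s e v sI eI vY v0.
    set cc := e * expR (K * s) in vY *.
    have cc0 : 0 < cc by case/andP: eI => e0 _; rewrite mulr_gt0 // expR_gt0.
    have fs : f s = cc.
      move: vY; rewrite /Y mul_mx_scalar => /eqP; rewrite -subr_eq0 -scalerBl scaler_eq0.
      by rewrite (negbTE v0) orbF subr_eq0 eqr_opp => /eqP.
    have -> : e * K * expR (K * s) = cc * K by rewrite /cc mulrAC.
    rewrite /DY qfsc.
    have q1 := qf1_pos v0.
    have hfd := fd_le s (ltac:(by case/andP: sI => /ltW -> ->)).
    rewrite fs in hfd.
    have -> : - fd s * qf 1%:M v + cc * K * qf 1%:M v = (cc * K - fd s) * qf 1%:M v by ring.
    apply: mulr_gt0 => //.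
    move: hfd; rewrite mulrBl mul1r [K * _]mulrC; lra.
  - by rewrite T0 lexx.
have HT : f T = 0.
  move: H1; rewrite /Y qfsc.
  have -> : qf 1%:M (const_mx 1 : 'rV[R]_1) = 1.
    by rewrite qf1_dot /dot mxE big_ord1 !mxE mulr1.
  rewrite mulr1 oppr_ge0 => H1.
  by apply/eqP; rewrite eq_le H1 sq2_ge0.
have Dz i j : (X T - (X T)^T) i j = 0.
  have HT' := HT; rewrite /f /sq2 in HT'.
  have h1 : \sum_(j < n) (X T - (X T)^T) i j * (X T - (X T)^T) i j = 0.
    apply: (psumr_eq0P _ HT') => // k _; apply: sumr_ge0 => l _.
    by rewrite -expr2 sqr_ge0.
  have : (X T - (X T)^T) i j * (X T - (X T)^T) i j = 0.
    apply: (psumr_eq0P _ h1) => // k _.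
    by rewrite -expr2 sqr_ge0.
  by move/eqP; rewrite mulf_eq0 orbb => /eqP.
apply/matrixP => i j; have := Dz j i; rewrite !mxE => /eqP; rewrite subr_eq0 => /eqP ->.
by [].
Qed.

End Sym4.

Unset Implicit Arguments.
Local Close Scope classical_set_scope.

Theorem theorem5p2 (R : realType) (n b c : nat)
  (A : 'M[R]_n) (B : 'M[R]_(n, b)) (C : 'M[R]_(c, n))
  (Xinf : 'M[R]_n) (Q : 'M[R]_n) (lam : 'I_n -> R) (X : R -> 'M[R]_n) :
  stabilizable A B ->
  detectable A C ->
  psd_mx Xinf ->
  riccati A B C Xinf = 0 ->
  Q^T *m Q = 1%:M ->
  (forall i : 'I_n, Xinf *m col i Q = lam i *: col i Q) ->
  (forall i j : 'I_n, (i <= j)%N -> lam j <= lam i) ->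
  DRE_solution A B C X ->
  forall (i j : 'I_n) (t : R), 0 <= t ->
    `| ((col i Q)^T *m X t *m col j Q) 0 0 | <= Num.sqrt (lam i * lam j).
Proof.
move=> _ _ [sXi pXi] ric0 QQ eig _ dre i j t t0.
have pX : psd Xinf.
  split; first exact: sXi.
  by move=> v; have := pXi v^T; rewrite trmxK.
have sX := X_sym dre.
exact: (final_step QQ eig (X_psd dre sX t0) (X_le dre sX pX ric0 t0) i j).
Qed.
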